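(* For all integers $m\ge1$, $n\ge0$ and $l\in\{1,\dots,d\}$, $$\alpha\Big(\prod_{r=n}^{n+m-1}(A_r+B^l_r)\Big)\ge\gamma(1-\gamma)^{m-1}\mathcal G_{[n,n+m)}-\mathcal H^l_{[n,n+m)}.$$
   Context: Setting (random batch CBO). Fix integers $N\ge2$, $d\ge1$, batch size $P\ge2$, drift $\gamma\in(0,1)$, noise level $\zeta\ge0$; $\mathcal N=\{1,\dots,N\}$. Weight functions $\omega_{S,j}:(\mathbb R^d)^N\to[0,\infty)$ for nonempty $S\subseteq\mathcal N$, $j\in\mathcal N$, with $\sum_{j\in S}\omega_{S,j}=1$ and $\omega_{S,j}=0$ for $j\notin S$. $\mathcal A$ is the set of partitions of $\mathcal N$ into $\lceil N/P\rceil$ batches, all of size $P$ except possibly one of size at most $P$; $(\mathcal B^n)_{n\ge0}$ i.i.d. uniform on $\mathcal A$; $[i]_n$ is the batch of $\mathcal B^n$ containing $i$. Noise arrays $(\eta^{i,l}_n)_{i,l}$ are i.i.d. in $n$ with $\mathbb E\eta^{i,l}_n=0$, $\mathbb E|\eta^{i,l}_n|^2\le\zeta^2$; initial data, batches, and noises are mutually independent. The dynamics is $\mathbf x^i_{n+1}=\mathbf x^i_n-\gamma(\mathbf x^i_n-\bar{\mathbf x}^{[i]_n,*}_n)-\sum_{l=1}^d(x^{i,l}_n-\bar x^{[i]_n,*,l}_n)\eta^{i,l}_n\mathbf e_l$ with $\bar{\mathbf x}^{S,*}_n=\sum_j\omega_{S,j}(X_n)\mathbf x^j_n$, $X_n=(\mathbf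 x^1_n,\dots,\mathbf x^N_n)$. Matrix notation: $W_n:=(\omega_{[i]_n,j}(X_n))_{i,j}$, $H^l_n:=\mathrm{diag}(\eta^{1,l}_n,\dots,\eta^{N,l}_n)$, $A_n:=(1-\gamma)I_N+\gamma W_n$, $B^l_n:=-H^l_n(I_N-W_n)$ (so that $\mathfrak x^l_{n+1}=(A_n+B^l_n)\mathfrak x^l_n$ with $\mathfrak x^l_n=(x^{1,l}_n,\dots,x^{N,l}_n)^\top$). Products are ordered as $\prod_{k=n_1}^{n_2}M_k:=M_{n_2}\cdots M_{n_1}$. $\alpha(A):=\min_{i,j}\sum_k\min\{a_{ik},a_{jk}\}$; $\|A\|_{1,\infty}:=\max_i\sum_j|a_{ij}|$. $\mathcal G_{[n,n+m)}:=\min_{i,j}|\{r:n\le r<n+m,[i]_r=[j]_r\}|$ and $\mathcal H^l_{[n,n+m)}:=2\big[\prod_{r=n}^{n+m-1}(1+2\|H^l_r\|_{1,\infty})-1\big]$. *)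

(* Defs.v *)
From HB Require Import structures.
From mathcomp Require Import all_boot all_order all_algebra.
Set Implicit Arguments. Unset Strict Implicit. Unset Printing Implicit Defensive.
Import Order.TTheory GRing.Theory Num.Theory.
Local Open Scope ring_scope.

Section Defs.
Variables (R : realFieldType) (N d : nat).

(* A configuration X = (x^1,...,x^N), row i = particle x^i in R^d. *)
Definition config := 'M[R]_(N, d).

Definition weightfun := {set 'I_N} -> config -> 'I_N -> R.

Definition weights_ok (omega : weightfun) : Prop :=
  [/\ (forall (S : {set 'I_N}) (X : config) (j : 'I_N), 0 <= omega S X j),
      (forall (S : {set 'I_N}) (X : config), S != set0 ->
          \sum_(j in S) omega S X j = 1)
    & (forall (S : {set 'I_N}) (X : config) (j : 'I_N), j \notin S ->
          omega S X j = 0)].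

Definition batch_partition (P : nat) (B : {set {set 'I_N}}) : bool :=
  [&& partition B [set: 'I_N],
      #|B| == ((N + P - 1) %/ P)%N,
      [forall S in B, #|S| <= P]
    & #|[set S in B | #|S| != P]| <= 1]%N.

Definition batch_of (Bt : nat -> {set {set 'I_N}}) (n : nat) (i : 'I_N) :=
  pblock (Bt n) i.

Definition xbar (omega : weightfun) (S : {set 'I_N}) (X : config) (l : 'I_d) : R :=
  \sum_j omega S X j * X j l.

(* The random batch CBO dynamics (pathwise) *)
Fixpoint traj (gamma : R) (omega : weightfun) (Bt : nat -> {set {set 'I_N}})
  (eta : nat -> 'I_N -> 'I_d -> R) (X0 : config) (n : nat) : config :=
  match n with
  | 0 => X0
  | n'.+1 =>
      let X := traj gamma omega Bt eta X0 n' in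
      \matrix_(i < N, l < d)
        (X i l - gamma * (X i l - xbar omega (batch_of Bt n' i) X l)
               - (X i l - xbar omega (batch_of Bt n' i) X l) * eta n' i l)
  end.

Definition Wmat (omega : weightfun) (Bt : nat -> {set {set 'I_N}}) (n : nat)
  (X : config) : 'M[R]_N :=
  \matrix_(i, j) omega (batch_of Bt n i) X j.

Definition Hmat (eta : nat -> 'I_N -> 'I_d -> R) (n : nat) (l : 'I_d) : 'M[R]_N :=
  diag_mx (\row_i eta n i l).

Definition Amat (gamma : R) (W : 'M[R]_N) : 'M[R]_N :=
  (1 - gamma)%:M + gamma *: W.

Definition Bmat (H W : 'M[R]_N) : 'M[R]_N := - (H *m (1%:M - W)).

(* ordered product  prod_{k=n}^{n+m-1} M_k = M_{n+m-1} ... M_n *)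
Fixpoint mprod (M : nat -> 'M[R]_N) (n m : nat) : 'M[R]_N :=
  match m with
  | 0 => 1%:M
  | m'.+1 => M (n + m')%N *m mprod M n m'
  end.

(* minimum over all pairs (i, j) of a function; the list is nonempty as N >= 1 *)
Definition pairs_list (T : Type) (f : 'I_N -> 'I_N -> T) : seq T :=
  [seq f i j | i <- enum 'I_N, j <- enum 'I_N].

Definition minpairs (f : 'I_N -> 'I_N -> R) : R :=
  let s := pairs_list f in \big[Num.min/head 0 s]_(x <- s) x.

Definition minpairsn (f : 'I_N -> 'I_N -> nat) : nat :=
  let s := pairs_list f in \big[minn/head 0%N s]_(x <- s) x.

Definition alpha (A : 'M[R]_N) : R :=
  minpairs (fun i j => \sum_k Num.min (A i k) (A j k)).

Definition norm1inf (A : 'M[R]_N) : R :=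
  \big[Num.max/0]_i \sum_j `|A i j|.

Definition Gcount (Bt : nat -> {set {set 'I_N}}) (n m : nat) : nat :=
  minpairsn (fun i j => count (fun r => batch_of Bt r i == batch_of Bt r j)
                              (iota n m)).

Definition Hcount (eta : nat -> 'I_N -> 'I_d -> R) (l : 'I_d) (n m : nat) : R :=
  2 * (\prod_(n <= r < n + m) (1 + 2 * norm1inf (Hmat eta r l)) - 1).

End Defs.

(* Main.v *)
Require Import Defs.
From HB Require Import structures.
From mathcomp Require Import all_boot all_order all_algebra.
From mathcomp Require Import ring lra.
Import Order.TTheory GRing.Theory Num.Theory.
Local Open Scope ring_scope.

Lemma rowb_mul (R : realFieldType) N (M1 M2 : 'M[R]_N) a b :
  0 <= b -> (forall i, \sum_j `|M1 i j| <= a) -> (forall i, \sum_j `|M2 i j| <= b) ->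
  forall i, \sum_j `|(M1 *m M2) i j| <= a * b.
Proof.
move=> b0 h1 h2 i.
apply: (le_trans (y := \sum_j \sum_t `|M1 i t| * `|M2 t j|)).
  apply: ler_sum => j _; rewrite mxE; apply: (le_trans (ler_norm_sum _ _ _)).
  by apply: ler_sum => t _; rewrite normrM.
rewrite exchange_big /=.
apply: (le_trans (y := \sum_t `|M1 i t| * b)).
  by apply: ler_sum => t _; rewrite -mulr_sumr; apply: ler_wpM2l.
by rewrite -mulr_suml; apply: ler_wpM2r.
Qed.

Lemma rowb_add (R : realFieldType) N (M1 M2 : 'M[R]_N) a b i :
  \sum_j `|M1 i j| <= a -> \sum_j `|M2 i j| <= b ->
  \sum_j `|(M1 + M2) i j| <= a + b.
Proof.
move=> h1 h2; apply: (le_trans (y := \sum_j (`|M1 i j| + `|M2 i j|))).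
  by apply: ler_sum => j _; rewrite mxE; apply: ler_normD.
by rewrite big_split /=; apply: lerD.
Qed.

Lemma sum_delta (R : realFieldType) N (i : 'I_N) (a : R) :
  \sum_j (a *+ (i == j)) = a.
Proof.
rewrite (bigD1 i) //= eqxx big1 ?addr0 // => j.
by rewrite eq_sym => /negbTE ->.
Qed.

Lemma prod_ge1 (R : realFieldType) (b : nat -> R) n m :
  (forall r, 0 <= b r) -> 1 <= \prod_(n <= r < m) (1 + b r).
Proof.
move=> hb; apply: (big_ind (fun x => 1 <= x)) => //.
  by move=> x y hx hy; rewrite -[1]mulr1; apply: ler_pM => //.
by move=> r _; rewrite lerDl.
Qed.

Lemma pert (R : realFieldType) N (A B : nat -> 'M[R]_N) (b : nat -> R) n :
 (forall r, 0 <= b r) ->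
 (forall r i, \sum_j `|A r i j| <= 1) ->
 (forall r i, \sum_j `|B r i j| <= b r) ->
 forall m,
   (forall i, \sum_j `|mprod (fun r => A r + B r) n m i j|
                <= \prod_(n <= r < n + m) (1 + b r))
   /\ (forall i, \sum_j `|(mprod (fun r => A r + B r) n m - mprod A n m) i j|
                <= \prod_(n <= r < n + m) (1 + b r) - 1).
Proof.
move=> hb hA hB; elim=> [|m [IH1 IH2]].
  rewrite addn0 big_geq //=; split=> i.
    rewrite (eq_bigr (fun j => 1 *+ (i == j))) ?sum_delta // => j _.
    by rewrite mxE normrMn normr1.
  rewrite subrr [1 - 1]subrr.
  by rewrite big1 // => j _; rewrite !mxE normr0.
have e : \prod_(n <= r < n + m.+1) (1 + b r)
         = (\prod_(n <= r < n + m) (1 + b r)) * (1 + b (n + m)%N).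
  by rewrite addnS big_nat_recr //= leq_addr.
have p1 := @prod_ge1 _ b n (n + m) hb.
rewrite e /=; split=> i.
  rewrite mulrC; apply: rowb_mul => //.
    by apply: (le_trans _ p1).
  by move=> k; apply: rowb_add.
set Q := mprod _ n m; set P := mprod A n m.
have E : (A (n+m)%N + B (n+m)%N) *m Q - A (n+m)%N *m P
    = A (n+m)%N *m (Q - P) + B (n+m)%N *m Q.
  by rewrite mulmxDl mulmxBr addrAC.
rewrite E.
set pi := \prod_(n <= r < n + m) (1 + b r).
apply: (le_trans (@rowb_add _ _ _ _ (1 * (pi - 1)) (b (n + m)%N * pi) i _ _)).
- by apply: rowb_mul; [rewrite subr_ge0| |]; [exact: p1 | exact: hA | exact: IH2].
- by apply: rowb_mul; [apply: (le_trans _ p1) | exact: hB | exact: IH1].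
by rewrite le_eqVlt; apply/orP; left; apply/eqP; ring.
Qed.


Lemma prodA_lb (R : realFieldType) N (W : nat -> 'M[R]_N) (g : R) n :
 0 <= g <= 1 -> (forall r i j, 0 <= W r i j) ->
 forall m,
 [/\ forall i k, 0 <= mprod (fun r => Amat g (W r)) n m i k,
     forall k, (1-g)^+m <= mprod (fun r => Amat g (W r)) n m k k &
     forall i k, g * (1-g)^+m * \sum_(r <- iota n m) W r i k
                  <= (1-g) * mprod (fun r => Amat g (W r)) n m i k].
Proof.
move=> /andP[g0 g1] hW; have c0 : 0 <= 1 - g by rewrite subr_ge0.
elim=> [|m [IH0 IHd IHs]].
  split=> [i k|k|i k] /=; rewrite mxE.
  - by rewrite mulrn_wge0.
  - by rewrite expr0 eqxx mulr1n.
  - by rewrite big_nil mulr0 mulr_ge0 // mulrn_wge0.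
set Q := mprod (fun r => Amat g (W r)) n m.
have key : forall i k, mprod (fun r => Amat g (W r)) n m.+1 i k
   = (1-g) * Q i k + g * \sum_t W (n+m)%N i t * Q t k.
  move=> i k /=; rewrite /Amat mulmxDl mul_scalar_mx -scalemxAl.
  by rewrite !mxE.
have lb : forall i k, (1-g) * Q i k + g * W (n+m)%N i k * Q k k
     <= mprod (fun r => Amat g (W r)) n m.+1 i k.
  move=> i k; rewrite key -mulrA lerD2l; apply: ler_wpM2l => //.
  rewrite (bigD1 k) //= lerDl; apply: sumr_ge0 => t _.
  by apply: mulr_ge0.
have Q0 : forall i k, 0 <= mprod (fun r => Amat g (W r)) n m.+1 i k.
  move=> i k; rewrite key; apply: addr_ge0; apply: mulr_ge0 => //.
  by apply: sumr_ge0 => t _; apply: mulr_ge0.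
split=> [i k|k|i k].
- exact: Q0.
- apply: le_trans (lb k k); rewrite exprS.
  apply: (le_trans (y := (1 - g) * Q k k)).
    exact: ler_wpM2l.
  by rewrite lerDl; apply: mulr_ge0 => //; apply: mulr_ge0.
- rewrite (_ : iota n m.+1 = iota n m ++ [:: (n + m)%N]); last by rewrite -addn1 iotaD.
  rewrite big_cat big_seq1 /=.
  apply: (le_trans (y := (1 - g) * ((1-g) * Q i k + g * W (n+m)%N i k * Q k k))); last first.
    by apply: ler_wpM2l => //; apply: le_trans (lb i k).
  have h1 := ler_wpM2l c0 (IHs i k).
  have h2 : (1-g) * g * W (n+m)%N i k * (1-g)^+m <= (1-g) * g * W (n+m)%N i k * Q k k.
    by apply: ler_wpM2l => //; apply: mulr_ge0 => //; apply: mulr_ge0.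
  rewrite exprSr.
  set S := \sum_(r <- iota n m) W r i k.
  set w := W (n+m)%N i k.
  set c := 1 - g.
  move: h1 h2; set x := c ^+ m; set q := Q i k; set qq := Q k k.
  move=> h1 h2.
  have -> : g * (x * c) * (S + w) = c * (g * x * S) + c * g * w * x by ring.
  have -> : c * (c * q + g * w * qq) = c * (c * q) + c * g * w * qq by ring.
  exact: lerD.
Qed.

Lemma bigmin_ge (R : realFieldType) (s : seq R) (x0 c : R) :
  c <= x0 -> (forall x, x \in s -> c <= x) -> c <= \big[Num.min/x0]_(x <- s) x.
Proof.
move=> h0; elim: s => [|y s IH] hs; first by rewrite big_nil.
rewrite big_cons le_min hs ?mem_head //= IH // => x hx.
by apply: hs; rewrite in_cons hx orbT.
Qed.

Lemma minpairs_ge (R : realFieldType) N (f : 'I_N -> 'I_N -> R) c :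
  (0 < N)%N -> (forall i j, c <= f i j) -> c <= minpairs f.
Proof.
move=> hN hf; rewrite /minpairs.
have hs : forall x, x \in pairs_list f -> c <= x.
  by move=> x /allpairsP [[i j] [_ _ ->]].
have hin : f (Ordinal hN) (Ordinal hN) \in pairs_list f.
  by apply: allpairs_f; rewrite mem_enum.
move: hs hin; case: (pairs_list f) => [//|x s] hs _ /=.
by apply: bigmin_ge => //; apply: hs; rewrite mem_head.
Qed.

Lemma bigminn_le (s : seq nat) (x0 y : nat) :
  y \in s -> (\big[minn/x0]_(x <- s) x <= y)%N.
Proof.
elim: s => [//|z s IH]; rewrite in_cons big_cons => /orP [/eqP -> | h].
  exact: geq_minl.
exact: leq_trans (geq_minr _ _) (IH h).
Qed.

Lemma minpairsn_le N (f : 'I_N -> 'I_N -> nat) i j : (minpairsn f <= f i j)%N.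
Proof.
rewrite /minpairsn; apply: bigminn_le.
by apply: allpairs_f; rewrite mem_enum.
Qed.

Lemma count_sum (R : realFieldType) (T : Type) (s : seq T) (a : pred T) :
  (count a s)%:R = \sum_(x <- s) (a x)%:R :> R.
Proof.
elim: s => [|x s IH]; first by rewrite big_nil.
by rewrite big_cons /= natrD IH.
Qed.

Lemma minpert (R : realFieldType) (q1 q2 p1 p2 : R) :
  Num.min p1 p2 - `|q1 - p1| - `|q2 - p2| <= Num.min q1 q2.
Proof.
have a1 := ler_norm (q1 - p1); have a2 := ler_norm (q2 - p2).
have b1 := normr_ge0 (q1 - p1); have b2 := normr_ge0 (q2 - p2).
have m1 : Num.min p1 p2 <= p1 by rewrite ge_min lexx.
have m2 : Num.min p1 p2 <= p2 by rewrite ge_min lexx orbT.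
rewrite le_min; apply/andP; split.
- have a3 : - `|q1 - p1| <= q1 - p1 by rewrite lerNl -normrN ler_norm.
  lra.
- have a3 : - `|q2 - p2| <= q2 - p2 by rewrite lerNl -normrN ler_norm.
  lra.
Qed.

Lemma norm1inf_ge (R : realFieldType) N (M : 'M[R]_N) i :
  \sum_j `|M i j| <= norm1inf M.
Proof. by rewrite /norm1inf; apply: (le_bigmax _ (fun i => \sum_j `|M i j|)). Qed.

Lemma norm1inf_ge0 (R : realFieldType) N (M : 'M[R]_N) : 0 <= norm1inf M.
Proof.
rewrite /norm1inf; apply: (big_ind (fun x => 0 <= x)) => //.
  by move=> x y hx hy; rewrite le_max hx.
by move=> i _; apply: sumr_ge0.
Qed.

Lemma Brow (R : realFieldType) N (W : 'M[R]_N) (dd : 'rV[R]_N) i :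
  (forall j, 0 <= W i j) -> \sum_j W i j = 1 ->
  \sum_j `|Bmat (diag_mx dd) W i j| <= 2 * norm1inf (diag_mx dd).
Proof.
move=> h0 h1; rewrite /Bmat mul_diag_mx.
under eq_bigr do rewrite !mxE normrN normrM.
rewrite -mulr_sumr mulrC; apply: ler_pM => //.
- by apply: sumr_ge0.
- apply: (le_trans (y := \sum_j (`|(1%:M : 'M[R]_N) i j| + `|W i j|))).
    by apply: ler_sum => j _; rewrite !mxE; apply: (le_trans (ler_normD _ _)); rewrite normrN.
  rewrite big_split /=.
  rewrite (eq_bigr (fun j => 1 *+ (i == j))); last by move=> j _; rewrite mxE normrMn normr1.
  rewrite sum_delta (eq_bigr (fun j => W i j)); last by move=> j _; rewrite ger0_norm.
  by rewrite h1.
  apply: (le_trans _ (@norm1inf_ge _ _ (diag_mx dd) i)).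
  rewrite (bigD1 i) //= mxE eqxx mulr1n lerDl.
  by apply: sumr_ge0.
Qed.

Theorem lemma4p3 (R : realFieldType) (N d P : nat) (gamma : R)
  (omega : weightfun R N d) (Bt : nat -> {set {set 'I_N}})
  (eta : nat -> 'I_N -> 'I_d -> R) (X0 : config R N d) :
  (2 <= N)%N -> (1 <= d)%N -> (2 <= P)%N -> 0 < gamma < 1 ->
  weights_ok omega ->
  (forall n, batch_partition P (Bt n)) ->
  forall (m n : nat) (l : 'I_d), (1 <= m)%N ->
  let X := traj gamma omega Bt eta X0 in
  let W := fun r => Wmat omega Bt r (X r) in
  alpha (mprod (fun r => Amat gamma (W r) + Bmat (Hmat eta r l) (W r)) n m)
    >= gamma * (1 - gamma) ^+ (m - 1) * (Gcount Bt n m)%:R - Hcount eta l n m.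
Proof.
move=> N2 d1 P2 /andP[g0 g1] [hw0 hw1 hw2] hB m n l m1; cbv zeta.
pose X := traj gamma omega Bt eta X0.
pose W := fun r => Wmat omega Bt r (X r).
change (gamma * (1 - gamma) ^+ (m - 1) * (Gcount Bt n m)%:R - Hcount eta l n m <=
  alpha (mprod (fun r => Amat gamma (W r) + Bmat (Hmat eta r l) (W r)) n m)).
have W0 : forall r i j, 0 <= W r i j by move=> r i j; rewrite /W mxE.
have W1 : forall r i, \sum_j W r i j = 1.
  move=> r i; rewrite /W; under eq_bigr do rewrite mxE.
  set S := batch_of Bt r i.
  have iS : i \in S.
    rewrite /S /batch_of mem_pblock.
    move: (hB r) => /and4P [/and3P [/eqP -> _ _] _ _ _].
    by rewrite in_setT.
  rewrite (bigID (mem S)) /= [X in _ + X]big1 ?addr0.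
    by apply: hw1; apply/set0Pn; exists i.
  by move=> j /hw2.
have W2 : forall r i j k, batch_of Bt r i = batch_of Bt r j -> W r i k = W r j k.
  by move=> r i j k e; rewrite /W !mxE e.
have Arow : forall r i, \sum_j `|Amat gamma (W r) i j| <= 1.
  move=> r i.
  rewrite (eq_bigr (fun j => (1 - gamma) *+ (i == j) + gamma * W r i j)); last first.
    move=> j _; rewrite /Amat !mxE ger0_norm //.
    apply: addr_ge0; first by apply: mulrn_wge0; rewrite subr_ge0 ltW.
    by apply: mulr_ge0 => //; apply: ltW.
  by rewrite big_split /= sum_delta -mulr_sumr W1 mulr1 subrK.
have Brow' : forall r i, \sum_j `|Bmat (Hmat eta r l) (W r) i j|
                          <= 2 * norm1inf (Hmat eta r l).
  by move=> r i; apply: Brow.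
have b0 : forall r, 0 <= 2 * norm1inf (Hmat eta r l).
  by move=> r; rewrite mulr_ge0 // norm1inf_ge0.
have [_ hD] := @pert _ _ (fun r => Amat gamma (W r))
   (fun r => Bmat (Hmat eta r l) (W r)) (fun r => 2 * norm1inf (Hmat eta r l))
   n b0 Arow Brow' m.
have g01 : 0 <= gamma <= 1 by rewrite !ltW.
have [_ _ hS] := @prodA_lb _ _ W gamma n g01 W0 m.
case: m m1 hD hS => [//|m'] _ hD hS.
have -> : (m'.+1 - 1 = m')%N by rewrite subn1.
set c' := gamma * (1 - gamma) ^+ m'.
set Q := mprod (fun r => Amat gamma (W r) + Bmat (Hmat eta r l) (W r)) n m'.+1.
set Pm := mprod (fun r => Amat gamma (W r)) n m'.+1.
have c0 : 0 < 1 - gamma by rewrite subr_gt0.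
have c'0 : 0 <= c' by rewrite /c' mulr_ge0 ?exprn_ge0 ?ltW.
have hP : forall i k, c' * \sum_(r <- iota n m'.+1) W r i k <= Pm i k.
  move=> i k; have := hS i k; rewrite exprS.
  rewrite (_ : gamma * ((1-gamma) * (1-gamma)^+m') * _
     = (1-gamma) * (c' * \sum_(r <- iota n m'.+1) W r i k)); last by rewrite /c'; ring.
  by rewrite ler_pM2l.
apply: minpairs_ge; first by apply: ltnW.
move=> i j.
set pi := \prod_(n <= r < n + m'.+1) (1 + 2 * norm1inf (Hmat eta r l)).
have e1 : \sum_k Num.min (Pm i k) (Pm j k) - \sum_k `|(Q - Pm) i k|
     - \sum_k `|(Q - Pm) j k| <= \sum_k Num.min (Q i k) (Q j k).
  rewrite -!sumrB; apply: ler_sum => k _; rewrite !mxE; exact: minpert.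
have e2 : c' * \sum_(r <- iota n m'.+1) \sum_k Num.min (W r i k) (W r j k)
     <= \sum_k Num.min (Pm i k) (Pm j k).
  rewrite exchange_big mulr_sumr /=; apply: ler_sum => k _.
  rewrite le_min; apply/andP; split; [apply: le_trans (hP i k) | apply: le_trans (hP j k)];
    apply: ler_wpM2l => //; apply: ler_sum => r _;
    by rewrite ge_min lexx ?orbT.
have e3 : (count (fun r => batch_of Bt r i == batch_of Bt r j) (iota n m'.+1))%:R
     <= \sum_(r <- iota n m'.+1) \sum_k Num.min (W r i k) (W r j k).
  rewrite count_sum; apply: ler_sum => r _.
  case: eqP => [e | _].
    by rewrite (eq_bigr (fun k => W r i k)) ?W1 // => k _; rewrite -(W2 r i j k e) minxx.
  by apply: sumr_ge0 => k _; rewrite le_min !W0.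
have e4 : (Gcount Bt n m'.+1 <= count (fun r => batch_of Bt r i == batch_of Bt r j)
                                   (iota n m'.+1))%N.
  by rewrite /Gcount; apply: (@minpairsn_le _ (fun i j =>
      count (fun r => batch_of Bt r i == batch_of Bt r j) (iota n m'.+1))).
have e5 : \sum_k `|(Q - Pm) i k| <= pi - 1 := hD i.
have e5' : \sum_k `|(Q - Pm) j k| <= pi - 1 := hD j.
have Hc : Hcount eta l n m'.+1 = 2 * (pi - 1) by [].
have e4' : (Gcount Bt n m'.+1)%:R <= (count (fun r => batch_of Bt r i == batch_of Bt r j)
                                   (iota n m'.+1))%:R :> R by rewrite ler_nat.
have e6 := ler_wpM2l c'0 e4'.
have e7 := ler_wpM2l c'0 e3.
rewrite Hc.
move: e1 e2 e5 e5' e6 e7.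
set a1 := \sum_k Num.min (Pm i k) (Pm j k).
set a2 := \sum_k Num.min (Q i k) (Q j k).
set a3 := \sum_k `|(Q - Pm) i k|.
set a4 := \sum_k `|(Q - Pm) j k|.
move=> e1 e2 e5 e5' e6 e7.
lra.
Qed.
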